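(* Let $n\ge 4$ with $n\equiv 2\pmod 6$, and let $G=P_4\cup P_{n-4}$ (disjoint union of a path on $4$ vertices and a path on $n-4$ vertices). Then $\operatorname{rank}(A_G+I_n)=\operatorname{rank}(A_{\overline G}+I_n)=n$.
   Context: All graphs are simple. $P_m$ is the path on $m$ vertices and $\cup$ denotes disjoint union of graphs. $A_G$ denotes the $n\times n$ adjacency matrix of $G$, $\overline{G}$ the complement of $G$, $I_n$ the identity matrix, and rank is over $\mathbb{R}$. *)

(* Defs.v *)
From HB Require Import structures.
From mathcomp Require Import all_boot all_order all_algebra.
Set Implicit Arguments. Unset Strict Implicit. Unset Printing Implicit Defensive.
Import Order.TTheory GRing.Theory Num.Theory.
Local Open Scope ring_scope.

Definition path_adj (R : pzRingType) (m : nat) : 'M[R]_m :=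
  \matrix_(i < m, j < m) (if (i.+1 == j :> nat) || (j.+1 == i :> nat) then 1 else 0).

Definition disj_union_adj (R : pzRingType) (m1 m2 : nat)
  (A1 : 'M[R]_m1) (A2 : 'M[R]_m2) : 'M[R]_(m1 + m2) :=
  block_mx A1 0 0 A2.

(* Adjacency matrix of the complement of the simple graph with adjacency
   (0/1, symmetric, zero-diagonal) matrix A. *)
Definition compl_adj (R : pzRingType) (n : nat) (A : 'M[R]_n) : 'M[R]_n :=
  \matrix_(i < n, j < n) (if i == j then 0 else 1 - A i j).

(* Main.v *)
Require Import Defs.
From HB Require Import structures.
From mathcomp Require Import all_boot all_order all_algebra.
From mathcomp Require Import zify ring lra.
Import Order.TTheory GRing.Theory Num.Theory.
Set Implicit Arguments.
Local Open Scope ring_scope.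

Section S.
Variable R : realFieldType.

Lemma rank_full n (M : 'M[R]_n) : (forall v : 'rV_n, v *m M = 0 -> v = 0) -> \rank M = n.
Proof.
move=> H; apply/eqP; change (row_free M); rewrite -kermx_eq0; apply/eqP/row_matrixP => i.
by rewrite row0; apply: H; rewrite -row_mul mulmx_ker row0.
Qed.

Definition xof n (v : 'rV[R]_n) (k : nat) : R :=
  oapp (fun i : 'I_n => v 0 i) 0 (insub k).

Lemma xofE n (v : 'rV[R]_n) (i : 'I_n) : xof v i = v 0 i.
Proof. by rewrite /xof valK. Qed.

Lemma xof_out n (v : 'rV[R]_n) k : (n <= k)%N -> xof v k = 0.
Proof. by move=> h; rewrite /xof insubN // -leqNgt. Qed.

Lemma sum_pick n (v : 'rV[R]_n) k :
  \sum_(i < n) (if val i == k then v 0 i else 0) = xof v k.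
Proof.
case: (ltnP k n) => hk.
  rewrite (bigD1 (Ordinal hk)) //= eqxx big1 ?addr0 ?(xofE v (Ordinal hk)) //.
  by move=> i hi; case: eqP => // e; case/eqP: hi; apply/val_inj.
rewrite xof_out // big1 // => i _; case: eqP => // e.
by move: (ltn_ord i); rewrite e ltnNge hk.
Qed.

Definition c1 (j : nat) : R := if (0 < j)%N && (j != 4)%N then 1 else 0.
Definition c2 (j : nat) : R := if (j != 3)%N then 1 else 0.

Lemma Aentry m (i j : 'I_(4 + m)) :
  disj_union_adj (path_adj R 4) (path_adj R m) i j =
  (if val i == j.-1 then c1 j else 0) + (if val i == j.+1 then c2 j else 0).
Proof.
rewrite /disj_union_adj /c1 /c2.
case: (splitP i) => [i' ei|i' ei]; case: (splitP j) => [j' ej|j' ej].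
- have -> : i = lshift m i' by apply/val_inj.
  have -> : j = lshift m j' by apply/val_inj.
  rewrite block_mxEul !mxE /=.
  case: i' {ei} => [[|[|[|[|?]]]] ?] //; case: j' {ej} => [[|[|[|[|?]]]] ?] //=;
    rewrite ?addr0 ?add0r //.
- have -> : i = lshift m i' by apply/val_inj.
  have -> : j = rshift 4 j' by apply/val_inj.
  rewrite block_mxEur !mxE /=.
  case: i' {ei} => [i' hi] /=.
  by repeat (case: ifP => ?); rewrite ?addr0 ?add0r //; lia.
- have -> : i = rshift 4 i' by apply/val_inj.
  have -> : j = lshift m j' by apply/val_inj.
  rewrite block_mxEdl !mxE /=.
  case: j' {ej} => [j' hj] /=.
  by repeat (case: ifP => ?); rewrite ?addr0 ?add0r //; lia.
- have -> : i = rshift 4 i' by apply/val_inj.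
  have -> : j = rshift 4 j' by apply/val_inj.
  rewrite block_mxEdr !mxE /=.
  case: i' {ei} => [i' hi]; case: j' {ej} => [j' hj] /=.
  by repeat (case: ifP => ?); rewrite ?addr0 ?add0r //; lia.
Qed.

Notation AA m := (disj_union_adj (path_adj R 4) (path_adj R m)).

Lemma col1 m (v : 'rV[R]_(4 + m)) : v *m (AA m + 1%:M) = 0 ->
  forall j, (j < 4 + m)%N -> xof v j + xof v j.-1 * c1 j + xof v j.+1 * c2 j = 0.
Proof.
move=> hv j hj; have := congr1 (fun M : 'M[R]_(1, 4 + m) => M 0 (Ordinal hj)) hv; rewrite !mxE.
rewrite (eq_bigr (fun i => (if val i == j.-1 then v 0 i else 0) * c1 j +
   (if val i == j.+1 then v 0 i else 0) * c2 j + (if val i == j then v 0 i else 0))).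
  by rewrite !big_split -!mulr_suml !sum_pick /=; move=> <-; ring.
move=> i _; have E := Aentry i (Ordinal hj); rewrite !mxE in E; rewrite !mxE E /=.
change (i == Ordinal hj) with (val i == j).
by case: (val i == j.-1); case: (val i == j.+1); case: (val i == j); rewrite /=; ring.
Qed.

Lemma Adiag m (i : 'I_(4 + m)) : AA m i i = 0.
Proof.
rewrite Aentry /c1 /=; case: (nat_of_ord i) => [|k] /=; first by rewrite addr0.
have -> : (k.+1 == k) = false by lia.
have -> : (k.+1 == k.+2) = false by lia.
by rewrite addr0.
Qed.

Lemma col2 m (v : 'rV[R]_(4 + m)) : v *m (compl_adj (AA m) + 1%:M) = 0 ->
  forall j, (j < 4 + m)%N -> \sum_(i < 4 + m) v 0 i = xof v j.-1 * c1 j + xof v j.+1 * c2 j.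
Proof.
move=> hv j hj; have := congr1 (fun M : 'M[R]_(1, 4 + m) => M 0 (Ordinal hj)) hv; rewrite !mxE.
rewrite (eq_bigr (fun i => v 0 i - ((if val i == j.-1 then v 0 i else 0) * c1 j +
   (if val i == j.+1 then v 0 i else 0) * c2 j))).
  by rewrite sumrB !big_split -!mulr_suml !sum_pick /= => /eqP; rewrite subr_eq0 => /eqP.
move=> i _; have E := Aentry i (Ordinal hj); rewrite !mxE in E; rewrite !mxE.
case: eqP => [->|ne] /=.
  clear E; rewrite /c1; move: hj; case: j => [|k] hj /=; first by rewrite /c2 /=; ring.
  have -> : (k.+1 == k) = false by lia.
  have -> : (k.+1 == k.+2) = false by lia.
  by rewrite /=; ring.
rewrite E /=.
by case: (val i == j.-1); case: (val i == j.+1); rewrite /=; ring.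
Qed.

Lemma rec2 (y f : nat -> R) (g : R -> R -> R) m :
  y 0%N = f 0%N -> y 1%N = f 1%N ->
  (forall k, (k.+2 <= m)%N -> y k.+2 = g (y k.+1) (y k)) ->
  (forall k, f k.+2 = g (f k.+1) (f k)) ->
  forall k, (k <= m)%N -> y k = f k.
Proof.
move=> h0 h1 hy hf.
have H : forall k, (k.+1 <= m)%N -> y k = f k /\ y k.+1 = f k.+1.
  elim=> [|k IH] hk; first by split.
  have [e1 e2] := IH (ltnW hk); split => //.
  by rewrite hy // hf e1 e2.
case=> [|k] hk; first by [].
by case: (H k hk).
Qed.

Fixpoint cseq (a : R) (k : nat) : R :=
  match k with 0%N => a | 1%N => - a | S ((S k'') as k') => - cseq a k' - cseq a k'' end.

Lemma cseq3 a k : cseq a k.+3 = cseq a k.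
Proof. rewrite /=; case: k => [|[|k]] /=; ring. Qed.

Lemma cseq31 a q : cseq a (3 * q + 1) = - a.
Proof.
elim: q => [|q IH] //.
have -> : (3 * q.+1 + 1 = (3 * q + 1).+3)%N by lia.
by rewrite cseq3.
Qed.

Lemma cseq0 k : cseq 0 k = 0.
Proof.
suff : cseq 0 k = 0 /\ cseq 0 k.+1 = 0 by case.
elim: k => [|k [IH1 IH2]]; first by rewrite /= oppr0.
split => //.
have -> : cseq 0 k.+2 = - cseq 0 k.+1 - cseq 0 k by [].
by rewrite IH2 IH1 subr0 oppr0.
Qed.

Lemma part1 m (x : nat -> R) : (m %% 3 = 1)%N -> x (4 + m)%N = 0 ->
  (forall j, (j < 4 + m)%N -> x j + x j.-1 * c1 j + x j.+1 * c2 j = 0) ->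
  forall k, (k < 4 + m)%N -> x k = 0.
Proof.
move=> hm hxm E.
have e0 := E 0%N ltac:(lia). have e1 := E 1%N ltac:(lia).
have e2 := E 2%N ltac:(lia). have e3 := E 3%N ltac:(lia).
rewrite /c1 /c2 /= in e0 e1 e2 e3.
have x1 : x 1%N = 0 by lra.
have x0 : x 0%N = 0 by lra.
have x2 : x 2%N = 0 by lra.
have x3 : x 3%N = 0 by lra.
pose y k := x (4 + k)%N.
have ey : forall k, (k.+2 <= m)%N -> y k.+2 = - y k.+1 - y k.
  move=> k hk; have := E (4 + k.+1)%N ltac:(lia).
  have -> : c1 (4 + k.+1) = 1 by rewrite /c1 (_ : (_ && _) = true) //; lia.
  have -> : c2 (4 + k.+1) = 1 by rewrite /c2 (_ : (_ != _) = true) //; lia.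
  have -> : ((4 + k.+1).-1 = 4 + k)%N by lia.
  have -> : ((4 + k.+1).+1 = 4 + k.+2)%N by lia.
  rewrite /y; lra.
have y1 : y 1%N = - y 0%N.
  have := E 4%N ltac:(lia); rewrite /c1 /c2 /= /y; lra.
have hy := @rec2 y (cseq (y 0%N)) (fun a b => - a - b) m erefl y1 ey
   (fun k => erefl).
have my : m = (3 * (m %/ 3) + 1)%N by lia.
have y0 : y 0%N = 0.
  have := hy m (leqnn m); rewrite {2}my cseq31 /y hxm; lra.
move=> k hk; case: (ltnP k 4) => hk4.
  by case: k hk hk4 => [|[|[|[|k]]]].
have -> : k = (4 + (k - 4))%N by lia.
by have := hy (k - 4)%N ltac:(lia); rewrite y0 cseq0.
Qed.

Fixpoint pseq (t s : R) (k : nat) : R :=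
  match k with 0%N => t | 1%N => s | S (S k'') => s - pseq t s k'' end.

Lemma pseq4 t s k : pseq t s k.+4 = pseq t s k.
Proof. rewrite /=; ring. Qed.

Lemma pseq4q t s q r : pseq t s (4 * q + r) = pseq t s r.
Proof.
elim: q => [|q IH] //.
have -> : (4 * q.+1 + r = (4 * q + r).+4)%N by lia.
by rewrite pseq4.
Qed.

Lemma pseq_sum t s q : \sum_(i < 4 * q) pseq t s i = q%:R * (s + s).
Proof.
elim: q => [|q IH]; first by rewrite big_ord0 mul0r.
have -> : (4 * q.+1 = (4 * q).+4)%N by lia.
rewrite !big_ord_recr /= IH mulrSr; ring.
Qed.

Lemma pseq_sum2 t s q : \sum_(i < 4 * q + 2) pseq t s i = q%:R * (s + s) + (t + s).
Proof.
rewrite big_split_ord pseq_sum !big_ord_recr big_ord0 /= !pseq4q /=; ring.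
Qed.

Lemma pseq00 k : pseq 0 0 k = 0.
Proof.
suff : pseq 0 0 k = 0 /\ pseq 0 0 k.+1 = 0 by case.
elim: k => [|k [IH1 IH2]]; first by [].
split => //.
have -> : pseq 0 0 k.+2 = 0 - pseq 0 0 k by [].
by rewrite IH1 subr0.
Qed.

Lemma part2 m (x : nat -> R) (s : R) : (m %% 2 = 0)%N -> (0 < m)%N -> x (4 + m)%N = 0 ->
  s = \sum_(i < 4 + m) x i ->
  (forall j, (j < 4 + m)%N -> s = x j.-1 * c1 j + x j.+1 * c2 j) ->
  forall k, (k < 4 + m)%N -> x k = 0.
Proof.
move=> hm hm0 hxm hs E.
have e0 := E 0%N ltac:(lia). have e1 := E 1%N ltac:(lia).
have e2 := E 2%N ltac:(lia). have e3 := E 3%N ltac:(lia).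
rewrite /c1 /c2 /= in e0 e1 e2 e3.
have x1 : x 1%N = s by lra.
have x2 : x 2%N = s by lra.
have x0 : x 0%N = 0 by lra.
have x3 : x 3%N = 0 by lra.
pose y k := x (4 + k)%N.
have ey : forall k, (k.+2 <= m)%N -> y k.+2 = s - y k.
  move=> k hk; have := E (4 + k.+1)%N ltac:(lia).
  have -> : c1 (4 + k.+1) = 1 by rewrite /c1 (_ : (_ && _) = true) //; lia.
  have -> : c2 (4 + k.+1) = 1 by rewrite /c2 (_ : (_ != _) = true) //; lia.
  have -> : ((4 + k.+1).-1 = 4 + k)%N by lia.
  have -> : ((4 + k.+1).+1 = 4 + k.+2)%N by lia.
  rewrite /y; lra.
have y1 : y 1%N = s.
  have := E 4%N ltac:(lia); rewrite /c1 /c2 /= /y; lra.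
have hy := @rec2 y (pseq (y 0%N) s) (fun a b => s - b) m erefl y1 ey
   (fun k => erefl).
have hsum : s = s + s + \sum_(i < m) pseq (y 0%N) s i.
  rewrite {1}hs big_split_ord /= !big_ord_recr big_ord0 /= x0 x1 x2 x3.
  congr (_ + _); first ring.
  by apply: eq_bigr => i _; rewrite -hy // ltnW.
have [s0 t0] : s = 0 /\ y 0%N = 0.
  have hmy := hy m (leqnn m); rewrite /y hxm in hmy.
  have [Q [m4|m4]] : exists Q, (m = 4 * Q)%N \/ (m = 4 * Q + 2)%N.
    by exists (m %/ 4)%N; lia.
  - rewrite m4 -(addn0 (4 * _)%N) pseq4q /= in hmy.
    rewrite m4 pseq_sum in hsum.
    have : ((2 * Q).+1)%:R * s = 0.
      rewrite -addn1 natrD natrM; lra.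
    by move/eqP; rewrite mulf_eq0 pnatr_eq0 /= => /eqP s0; split => //; rewrite /y; lra.
  - rewrite m4 pseq4q /= in hmy.
    rewrite m4 pseq_sum2 in hsum.
    have ht : y 0%N = s by rewrite /y; lra.
    rewrite ht in hsum.
    have : ((2 * Q).+3)%:R * s = 0.
      rewrite -addn3 natrD natrM; lra.
    by move/eqP; rewrite mulf_eq0 pnatr_eq0 /= => /eqP s0; split => //; lra.
move=> k hk; case: (ltnP k 4) => hk4.
  by case: k hk hk4 => [|[|[|[|k]]]] //= _ _; rewrite ?x1 ?x2.
have -> : k = (4 + (k - 4))%N by lia.
by have := hy (k - 4)%N ltac:(lia); rewrite t0 s0 pseq00.
Qed.
End S.

Theorem proposition5p7 (R : realFieldType) (m : nat) :
  (4 + m = 2 %[mod 6])%N ->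
  let A := disj_union_adj (path_adj R 4) (path_adj R m) in
  \rank ((A + 1%:M)%R) = (4 + m)%N /\ \rank ((compl_adj A + 1%:M)%R) = (4 + m)%N.
Proof.
move=> hm A; split.
- apply: rank_full => v hv.
  have E := col1 hv.
  have h := @part1 R m (xof R v) ltac:(lia) (@xof_out R _ v _ (leqnn _)) E.
  by apply/rowP => i; rewrite !mxE -xofE h.
- apply: rank_full => v hv.
  have E := col2 hv.
  have hs : \sum_(i < 4 + m) v 0 i = \sum_(i < 4 + m) xof R v i.
    by apply: eq_bigr => i _; rewrite xofE.
  rewrite hs in E.
  have h := @part2 R m (xof R v) _ ltac:(lia) ltac:(lia) (@xof_out R _ v _ (leqnn _)) erefl E.
  by apply/rowP => i; rewrite !mxE -xofE h.
Qed.
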